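(* Let $K$ be a simplex in a topological vector space $F$ and let $Y$ be a nonempty convex subset of a topological vector space $E$. Let $T:K\to 2^{Y}$ be a weakly naturally quasiconvex correspondence. Then $T$ has a continuous selection on $K$, i.e. there is a continuous map $f:K\to Y$ with $f(x)\in T(x)$ for every $x\in K$.
   Context: A simplex is the convex hull of a finite affinely independent set. $\Delta_{n-1}=\{(\lambda_1,\dots,\lambda_n)\in\mathbb{R}^n:\sum_{i=1}^n\lambda_i=1,\ \lambda_i\ge 0\}$. Weakly naturally quasiconvex (WNQ): let $X,Y$ be nonempty convex subsets of topological vector spaces. A correspondence $T:X\to 2^{Y}$ is weakly naturally quasiconvex if for each $n\in\mathbb{N}$ and each finite set $\{x_1,\dots,x_n\}\subset X$ there exist $y_i\in T(x_i)$ ($i=1,\dots,n$) and a bijection $g:\Delta_{n-1}\to\Delta_{n-1}$ (depending on $x_1,\dots,x_n$) of the form $g(\lambda_1,\dots,\lambda_n)=(g_1(\lambda_1),\dots,g_n(\lambda_n))$, where each $g_i:[0,1]\to[0,1]$ is continuous with $g_i(0)=0$ and $g_i(1)=1$, such that for every $(\lambda_1,\dots,\lambda_n)\in\Delta_{n-1}$ we have $\sum_{i=1}^n g_i(\lambda_i)y_i\in T\big(\sum_{i=1}^n\lambda_i x_i\big)$. *)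

(* Defs.v *)
From Stdlib Require Import Reals.
Open Scope R_scope.

Record TVS : Type := {
  tv :> Type;
  tzero : tv;
  tadd : tv -> tv -> tv;
  topp : tv -> tv;
  tscal : R -> tv -> tv;
  tadd_assoc : forall x y z, tadd x (tadd y z) = tadd (tadd x y) z;
  tadd_comm : forall x y, tadd x y = tadd y x;
  tadd_0 : forall x, tadd tzero x = x;
  tadd_opp : forall x, tadd (topp x) x = tzero;
  tscal_assoc : forall a b x, tscal a (tscal b x) = tscal (a * b) x;
  tscal_1 : forall x, tscal 1 x = x;
  tscal_distr_v : forall a x y, tscal a (tadd x y) = tadd (tscal a x) (tscal a y);
  tscal_distr_s : forall a b x, tscal (a + b) x = tadd (tscal a x) (tscal b x);
  topen : (tv -> Prop) -> Prop;
  topen_full : topen (fun _ => True);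
  topen_inter : forall U V, topen U -> topen V -> topen (fun x => U x /\ V x);
  topen_union : forall (I : Type) (U : I -> tv -> Prop),
      (forall i, topen (U i)) -> topen (fun x => exists i, U i x);
  tadd_cont : forall x y U, topen U -> U (tadd x y) ->
      exists V W, topen V /\ topen W /\ V x /\ W y /\
        (forall a b, V a -> W b -> U (tadd a b));
  tscal_cont : forall r x U, topen U -> U (tscal r x) ->
      exists eps, 0 < eps /\ exists V, topen V /\ V x /\
        (forall s z, Rabs (s - r) < eps -> V z -> U (tscal s z));
  thausdorff : forall x y, x <> y ->
      exists U V, topen U /\ topen V /\ U x /\ V y /\ (forall z, ~ (U z /\ V z))
}.

Arguments tzero {_}.
Arguments tadd {_}.
Arguments topp {_}.
Arguments tscal {_}.
Arguments topen {_}.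

Fixpoint sumR (n : nat) (a : nat -> R) : R :=
  match n with O => 0 | S m => sumR m a + a m end.

Fixpoint vsum {V : TVS} (n : nat) (w : nat -> V) : V :=
  match n with O => tzero | S m => tadd (vsum m w) (w m) end.

(* lam is in Delta_{n-1} (only the first n coordinates matter) *)
Definition in_Delta (n : nat) (lam : nat -> R) : Prop :=
  (forall i, (i < n)%nat -> 0 <= lam i) /\ sumR n lam = 1.

Definition convex {V : TVS} (X : V -> Prop) : Prop :=
  forall a b t, X a -> X b -> 0 <= t <= 1 ->
    X (tadd (tscal (1 - t) a) (tscal t b)).

Definition aff_indep {V : TVS} (n : nat) (v : nat -> V) : Prop :=
  forall c : nat -> R, sumR n c = 0 ->
    vsum n (fun i => tscal (c i) (v i)) = tzero ->
    forall i, (i < n)%nat -> c i = 0.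

Definition is_simplex {V : TVS} (K : V -> Prop) : Prop :=
  exists (n : nat) (v : nat -> V),
    (forall i j, (i < n)%nat -> (j < n)%nat -> v i = v j -> i = j) /\
    aff_indep n v /\
    (forall x, K x <-> exists lam, in_Delta n lam /\ x = vsum n (fun i => tscal (lam i) (v i))).

Definition cont_on_01 (h : R -> R) : Prop :=
  forall t, 0 <= t <= 1 -> forall eps, 0 < eps -> exists delta, 0 < delta /\
    forall s, 0 <= s <= 1 -> Rabs (s - t) < delta -> Rabs (h s - h t) < eps.

Definition admissible_g (n : nat) (g : nat -> R -> R) : Prop :=
  (forall i, (i < n)%nat ->
     cont_on_01 (g i) /\ (forall t, 0 <= t <= 1 -> 0 <= g i t <= 1) /\
     g i 0 = 0 /\ g i 1 = 1) /\
  (forall lam, in_Delta n lam -> in_Delta n (fun i => g i (lam i))) /\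
  (forall lam mu, in_Delta n lam -> in_Delta n mu ->
     (forall i, (i < n)%nat -> g i (lam i) = g i (mu i)) ->
     forall i, (i < n)%nat -> lam i = mu i) /\
  (forall mu, in_Delta n mu -> exists lam, in_Delta n lam /\
     forall i, (i < n)%nat -> g i (lam i) = mu i).

Definition WNQ {F E : TVS} (X : F -> Prop) (T : F -> E -> Prop) : Prop :=
  forall (n : nat) (x : nat -> F),
    (forall i, (i < n)%nat -> X (x i)) ->
    (forall i j, (i < n)%nat -> (j < n)%nat -> x i = x j -> i = j) ->
    exists (y : nat -> E) (g : nat -> R -> R),
      (forall i, (i < n)%nat -> T (x i) (y i)) /\
      admissible_g n g /\
      (forall lam, in_Delta n lam ->
         T (vsum n (fun i => tscal (lam i) (x i)))
           (vsum n (fun i => tscal (g i (lam i)) (y i)))).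

Definition continuous_on {F E : TVS} (K : F -> Prop) (f : F -> E) : Prop :=
  forall x, K x -> forall U : E -> Prop, topen U -> U (f x) ->
    exists V : F -> Prop, topen V /\ V x /\ forall z, K z -> V z -> U (f z).

(* Main.v *)
Require Import Defs.
From Stdlib Require Import Reals Lra Lia Classical ClassicalEpsilon.
Open Scope R_scope.

Section Alg.
Variable V : TVS.
Lemma tadd_0r (x : V) : tadd x tzero = x.
Proof. rewrite tadd_comm. apply tadd_0. Qed.
Lemma tadd_cancel (a b c : V) : tadd a c = tadd b c -> a = b.
Proof.
  intro H.
  assert (E : forall u : V, tadd (tadd u c) (topp c) = u).
  { intro u. rewrite <- tadd_assoc. rewrite (tadd_comm _ c (topp c)), tadd_opp. apply tadd_0r. }
  rewrite <- (E a), <- (E b), H. reflexivity.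
Qed.
Lemma tscal_0 (x : V) : tscal 0 x = tzero.
Proof.
  apply (tadd_cancel _ _ (tscal 0 x)). rewrite tadd_0.
  rewrite <- tscal_distr_s. f_equal. lra.
Qed.
Lemma tadd_swap (a b c d : V) : tadd (tadd a b) (tadd c d) = tadd (tadd a c) (tadd b d).
Proof.
  rewrite <- !tadd_assoc. f_equal. rewrite !tadd_assoc. f_equal. apply tadd_comm.
Qed.
Lemma vsum_ext n (u w : nat -> V) : (forall i, (i < n)%nat -> u i = w i) -> vsum n u = vsum n w.
Proof.
  induction n; intro H; simpl; auto. rewrite IHn by (intros; apply H; lia). rewrite H by lia. auto.
Qed.
Lemma vsum_add n (u w : nat -> V) : vsum n (fun i => tadd (u i) (w i)) = tadd (vsum n u) (vsum n w).
Proof.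
  induction n; simpl. now rewrite tadd_0. rewrite IHn. apply tadd_swap.
Qed.
End Alg.

Lemma sumR_minus n (a b : nat -> R) : sumR n (fun i => a i - b i) = sumR n a - sumR n b.
Proof. induction n; simpl; lra. Qed.

Lemma sumR_bound n (a b : nat -> R) d : (forall i, (i < n)%nat -> Rabs (b i - a i) < d) ->
  Rabs (sumR n b - sumR n a) <= INR n * d.
Proof.
  induction n; intro H. simpl. rewrite Rminus_0_r, Rabs_R0. lra.
  rewrite S_INR. simpl sumR.
  replace (sumR n b + b n - (sumR n a + a n)) with ((sumR n b - sumR n a) + (b n - a n)) by ring.
  eapply Rle_trans. apply Rabs_triang.
  specialize (IHn (fun i Hi => H i ltac:(lia))). specialize (H n ltac:(lia)). lra.
Qed.

Lemma sumR_ge n (a : nat -> R) : (forall i, (i < n)%nat -> 0 <= a i) ->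
  forall i, (i < n)%nat -> a i <= sumR n a.
Proof.
  induction n; intros H i Hi. lia. simpl.
  assert (0 <= sumR n a).
  { clear - H. induction n; simpl. lra. assert (0 <= a n) by (apply H; lia).
    assert (0 <= sumR n a) by (apply IHn; intros; apply H; lia). lra. }
  destruct (Nat.eq_dec i n). subst. lra.
  assert (a i <= sumR n a) by (apply IHn; [intros; apply H; lia | lia]).
  assert (0 <= a n) by (apply H; lia). lra.
Qed.

Lemma vsum_cont (V : TVS) n (w : nat -> V) (a : nat -> R) (U : V -> Prop) :
  topen U -> U (vsum n (fun i => tscal (a i) (w i))) ->
  exists d, 0 < d /\ forall b, (forall i, (i < n)%nat -> Rabs (b i - a i) < d) ->
    U (vsum n (fun i => tscal (b i) (w i))).
Proof.
  revert U; induction n; intros U hU hUa; simpl in *.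
  - exists 1. split. lra. auto.
  - destruct (tadd_cont V _ _ U hU hUa) as [V1 [W1 [hV1 [hW1 [h1 [h2 h3]]]]]].
    destruct (IHn V1 hV1 h1) as [d1 [hd1 hb1]].
    destruct (tscal_cont V _ _ W1 hW1 h2) as [e [he [V2 [hV2 [h4 h5]]]]].
    exists (Rmin d1 e). split. apply Rmin_pos; auto.
    intros b hb. apply h3.
    + apply hb1. intros i Hi. eapply Rlt_le_trans. apply hb. lia. apply Rmin_l.
    + apply h5; auto. eapply Rlt_le_trans. apply hb. lia. apply Rmin_r.
Qed.

Lemma g_unif n (g : nat -> R -> R) (l0 : nat -> R) :
  (forall i, (i < n)%nat -> cont_on_01 (g i)) -> (forall i, (i < n)%nat -> 0 <= l0 i <= 1) ->
  forall d, 0 < d -> exists e, 0 < e /\ forall mu, (forall i, (i < n)%nat -> 0 <= mu i <= 1) ->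
    (forall i, (i < n)%nat -> Rabs (mu i - l0 i) < e) ->
    forall i, (i < n)%nat -> Rabs (g i (mu i) - g i (l0 i)) < d.
Proof.
  induction n; intros hc hl d hd.
  - exists 1. split. lra. intros. lia.
  - destruct (IHn (fun i Hi => hc i ltac:(lia)) (fun i Hi => hl i ltac:(lia)) d hd) as [e1 [he1 H1]].
    destruct (hc n ltac:(lia) (l0 n) (hl n ltac:(lia)) d hd) as [e2 [he2 H2]].
    exists (Rmin e1 e2). split. apply Rmin_pos; auto.
    intros mu hmu hclose i Hi.
    destruct (Nat.eq_dec i n).
    + subst. apply H2. apply hmu; lia. eapply Rlt_le_trans. apply hclose. lia. apply Rmin_r.
    + apply H1; try lia. intros; apply hmu; lia.
      intros j Hj. eapply Rlt_le_trans. apply hclose. lia. apply Rmin_l.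
Qed.
Lemma compact01 (H : (R -> Prop) -> Prop) :
  (forall A B, (forall z, A z -> B z) -> H B -> H A) ->
  (forall A B, H A -> H B -> H (fun z => A z \/ B z)) ->
  (forall t, 0 <= t <= 1 -> exists d, 0 < d /\ H (fun s => Rabs (s - t) < d)) ->
  H (fun s => 0 <= s <= 1).
Proof.
  intros hmono hunion hloc.
  set (E := fun s => 0 <= s <= 1 /\ H (fun r => 0 <= r <= s)).
  assert (E0 : E 0).
  { split. lra. destruct (hloc 0 ltac:(lra)) as [d [hd Hd]].
    eapply hmono; [|exact Hd]. intros z hz. simpl in hz. replace z with 0 by lra.
    rewrite Rminus_0_r, Rabs_R0. exact hd. }
  destruct (completeness E) as [m [hub hlub]].
  { exists 1. intros x [hx _]. lra. }
  { exists 0. exact E0. }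
  assert (hm0 : 0 <= m) by (apply hub; exact E0).
  assert (hm1 : m <= 1) by (apply hlub; intros x [hx _]; lra).
  destruct (hloc m ltac:(lra)) as [d [hd Hd]].
  assert (hs : exists s, E s /\ m - d < s).
  { apply NNPP. intro hn. assert (m <= m - d); [|lra].
    apply hlub. intros x hx. apply Rnot_lt_le. intro hlt. apply hn. exists x. auto. }
  destruct hs as [s [[hs01 Hs] hsd]].
  set (s' := Rmin 1 (m + d / 2)).
  assert (Es' : E s').
  { split. unfold s'. unfold Rmin; destruct (Rle_dec 1 (m + d/2)); lra.
    eapply hmono; [| apply (hunion _ _ Hs Hd)].
    intros r [hr0 hr1]. simpl.
    destruct (Rle_dec r s). left. lra. right.
    assert (s' <= m + d/2) by apply Rmin_r.
    assert (s <= m) by (apply hub; split; auto).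
    unfold Rabs; destruct (Rcase_abs (r - m)); lra. }
  assert (s' <= m) by (apply hub; exact Es').
  destruct Es' as [_ Hs'].
  unfold s', Rmin in *. destruct (Rle_dec 1 (m + d/2)). exact Hs'. lra.
Qed.

Definition cube m (z : nat -> R) := forall i, (i < m)%nat -> 0 <= z i <= 1.
Definition ball m (c : nat -> R) d (z : nat -> R) := forall i, (i < m)%nat -> Rabs (z i - c i) < d.

Lemma cube_compact m (G : ((nat -> R) -> Prop) -> Prop) :
  (forall A B, (forall z, A z -> B z) -> G B -> G A) ->
  (forall A B, G A -> G B -> G (fun z => A z \/ B z)) ->
  (forall c, cube m c -> exists d, 0 < d /\ G (ball m c d)) ->
  G (cube m).
Proof.
  revert G; induction m; intros G hmono hunion hloc.
  - destruct (hloc (fun _ => 0)) as [d [hd Hd]]; [intros i Hi; lia|].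
    eapply hmono; [|exact Hd]. intros z _ i Hi. lia.
  - set (H := fun A : R -> Prop => G (fun z => cube m z /\ A (z m))).
    assert (HH : H (fun s => 0 <= s <= 1)).
    { apply compact01.
      - intros A B hAB HB. unfold H. eapply hmono; [|exact HB]. intros z [h1 h2]; auto.
      - intros A B HA HB. unfold H. eapply hmono; [|exact (hunion _ _ HA HB)].
        intros z [h1 [h2|h2]]; auto.
      - intros t ht.
        set (G' := fun B : (nat -> R) -> Prop => exists d, 0 < d /\ G (fun z => B z /\ Rabs (z m - t) < d)).
        assert (HG' : G' (cube m)).
        { apply IHm.
          - intros A B hAB [d [hd HB]]. exists d. split; auto. eapply hmono; [|exact HB].
            intros z [h1 h2]; auto.
          - intros A B [d1 [hd1 HA]] [d2 [hd2 HB]]. exists (Rmin d1 d2). split. apply Rmin_pos; auto.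
            eapply hmono; [|exact (hunion _ _ HA HB)].
            intros z [[h1|h1] h2]; [left|right]; split; auto; eapply Rlt_le_trans; eauto.
            apply Rmin_l. apply Rmin_r.
          - intros c hc.
            set (c' := fun i => if Nat.eqb i m then t else c i).
            destruct (hloc c') as [d [hd Hd]].
            { intros i Hi. unfold c'. destruct (Nat.eqb_spec i m). lra. apply hc. lia. }
            exists d. split; auto. exists d. split; auto. eapply hmono; [|exact Hd].
            intros z [h1 h2] i Hi. unfold c'. destruct (Nat.eqb_spec i m). subst; auto.
            apply h1. lia. }
        destruct HG' as [d [hd Hd]]. exists d. split; auto. }
    eapply hmono; [|exact HH]. intros z hz. split.
    intros i Hi; apply hz; lia. apply hz; lia.
Qed.
Definition phi {V : TVS} n (v : nat -> V) (lam : nat -> R) := vsum n (fun i => tscal (lam i) (v i)).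

Lemma phi_inj (V : TVS) n (v : nat -> V) : aff_indep n v ->
  forall lam mu, in_Delta n lam -> in_Delta n mu -> phi n v lam = phi n v mu ->
  forall i, (i < n)%nat -> lam i = mu i.
Proof.
  intros hai lam mu [_ hl] [_ hm] heq i Hi.
  assert (hc := hai (fun j => lam j - mu j)).
  cut (lam i - mu i = 0). lra. apply hc; auto.
  - rewrite sumR_minus. lra.
  - apply (tadd_cancel V _ _ (phi n v mu)). rewrite tadd_0. unfold phi.
    rewrite <- vsum_add. unfold phi in heq. rewrite <- heq. apply vsum_ext.
    intros j Hj. rewrite <- tscal_distr_s. f_equal. ring.
Qed.

Lemma inv_cont (V : TVS) n (v : nat -> V) : aff_indep n v ->
  forall l0, in_Delta n l0 -> forall eps, 0 < eps ->
  exists W, topen W /\ W (phi n v l0) /\ forall mu, in_Delta n mu -> W (phi n v mu) ->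
    forall i, (i < n)%nat -> Rabs (mu i - l0 i) < eps.
Proof.
  intros hai l0 hl0 eps heps.
  set (G := fun B : (nat -> R) -> Prop => exists W, topen W /\ W (phi n v l0) /\
     forall mu, B mu -> in_Delta n mu -> W (phi n v mu) -> forall i, (i < n)%nat -> Rabs (mu i - l0 i) < eps).
  assert (HG : G (cube n)).
  { apply cube_compact.
    - intros A B hAB [W [h1 [h2 h3]]]. exists W. split; auto.
    - intros A B [W1 [h1 [h2 h3]]] [W2 [h4 [h5 h6]]]. exists (fun x => W1 x /\ W2 x).
      split. apply topen_inter; auto. split. auto.
      intros mu [hA|hB] hD [hw1 hw2]; eauto.
    - intros c hc.
      destruct (classic (exists i, (i < n)%nat /\ eps / 2 <= Rabs (c i - l0 i))) as [[i [Hi hfar]] | hnear].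
      + destruct (classic (in_Delta n c)) as [hD | hnD].
        * assert (hne : phi n v c <> phi n v l0).
          { intro heq. assert (c i = l0 i) by (apply (phi_inj V n v hai); auto).
            rewrite H, Rminus_diag, Rabs_R0 in hfar. lra. }
          destruct (thausdorff V _ _ hne) as [U [W [hU [hW [hUc [hWl hdis]]]]]].
          destruct (vsum_cont V n v c U hU hUc) as [d [hd Hd]].
          exists d. split; auto. exists W. split; auto. split; auto.
          intros mu hmu _ hWmu. exfalso. apply (hdis (phi n v mu)). split; auto. apply Hd. exact hmu.
        * assert (hs : sumR n c <> 1).
          { intro hs. apply hnD. split; auto. intros j Hj. apply hc; auto. }
          set (d := Rabs (sumR n c - 1) / (INR n + 1)).
          assert (hpos : 0 < Rabs (sumR n c - 1)) by (apply Rabs_pos_lt; lra).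
          assert (hn0 : 0 <= INR n) by apply pos_INR.
          assert (hd : 0 < d) by (unfold d; apply Rdiv_lt_0_compat; lra).
          exists d. split; auto. exists (fun _ => True). split. apply topen_full. split; auto.
          intros mu hmu [_ hsum] _. exfalso.
          assert (hb := sumR_bound n c mu d hmu). rewrite hsum in hb.
          assert (INR n * d < Rabs (sumR n c - 1)).
          { unfold d. apply (Rmult_lt_reg_r (INR n + 1)). lra.
            unfold Rdiv. rewrite Rmult_assoc, (Rmult_assoc (Rabs _)), Rinv_l by lra. nra. }
          rewrite Rabs_minus_sym in hb. lra.
      + exists (eps / 2). split. lra. exists (fun _ => True). split. apply topen_full. split; auto.
        intros mu hmu _ _ i Hi.
        assert (h1 : Rabs (c i - l0 i) < eps / 2).
        { apply Rnot_le_lt. intro h. apply hnear. exists i. auto. }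
        specialize (hmu i Hi).
        replace (mu i - l0 i) with ((mu i - c i) + (c i - l0 i)) by ring.
        eapply Rle_lt_trans. apply Rabs_triang. lra. }
  destruct HG as [W [h1 [h2 h3]]]. exists W. split; auto. split; auto.
  intros mu hmu. apply h3; auto.
  destruct hmu as [hnn hs]. intros i Hi. split. auto. rewrite <- hs. apply sumR_ge; auto.
Qed.
Lemma sumR_ind n i : (i < n)%nat -> sumR n (fun j => if Nat.eqb j i then 1 else 0) = 1.
Proof.
  induction n; intro Hi. lia. simpl. destruct (Nat.eqb_spec n i).
  - subst. assert (forall k, (k <= i)%nat -> sumR k (fun j => if Nat.eqb j i then 1 else 0) = 0).
    { induction k; intro Hk; simpl. auto. rewrite IHk by lia. destruct (Nat.eqb_spec k i). lia. lra. }
    rewrite H by lia. lra.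
  - rewrite IHn by lia. lra.
Qed.

Lemma vsum_ind (V : TVS) n (v : nat -> V) i : (i < n)%nat ->
  vsum n (fun j => tscal (if Nat.eqb j i then 1 else 0) (v j)) = v i.
Proof.
  induction n; intro Hi. lia. simpl. destruct (Nat.eqb_spec n i).
  - subst. assert (forall k, (k <= i)%nat -> vsum k (fun j => tscal (if Nat.eqb j i then 1 else 0) (v j)) = tzero).
    { induction k; intro Hk; simpl. auto. rewrite IHk by lia. destruct (Nat.eqb_spec k i). lia.
      rewrite tscal_0. apply tadd_0. }
    rewrite H by lia. rewrite tscal_1. apply tadd_0.
  - rewrite IHn by lia. rewrite tscal_0. apply tadd_0r.
Qed.

Theorem theorem3 (F E : TVS) (K : F -> Prop) (Y : E -> Prop) (T : F -> E -> Prop)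
  (hK : is_simplex K)
  (hYne : exists y, Y y) (hYconv : convex Y)
  (hTY : forall x y, K x -> T x y -> Y y)
  (hT : WNQ K T) :
  exists f : F -> E, continuous_on K f /\
    (forall x, K x -> Y (f x) /\ T x (f x)).
Proof.
  destruct hK as [n [v [hvinj [hai hKiff]]]].
  assert (hv : forall i, (i < n)%nat -> K (v i)).
  { intros i Hi. apply hKiff. exists (fun j => if Nat.eqb j i then 1 else 0). split.
    - split. intros j _. destruct (Nat.eqb j i); lra. apply sumR_ind; auto.
    - symmetry. apply vsum_ind; auto. }
  destruct (hT n v hv hvinj) as [y [g [hy [hg hTg]]]].
  set (bc := fun x => epsilon (inhabits (fun _ : nat => 0)) (fun lam => in_Delta n lam /\ x = phi n v lam)).
  assert (hbc : forall x, K x -> in_Delta n (bc x) /\ x = phi n v (bc x)).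
  { intros x hx. unfold bc. apply epsilon_spec. apply hKiff. exact hx. }
  exists (fun x => vsum n (fun i => tscal (g i (bc x i)) (y i))). split.
  - intros x0 hx0 U hU hUf.
    destruct (hbc x0 hx0) as [hD0 hx0e].
    destruct (vsum_cont E n y (fun i => g i (bc x0 i)) U hU hUf) as [d [hd Hd]].
    assert (h01 : forall lam, in_Delta n lam -> forall i, (i < n)%nat -> 0 <= lam i <= 1).
    { intros lam [hnn hs] i Hi. split. auto. rewrite <- hs. apply sumR_ge; auto. }
    destruct (g_unif n g (bc x0) (fun i Hi => proj1 (proj1 hg i Hi)) (h01 _ hD0) d hd) as [e [he He]].
    destruct (inv_cont F n v hai (bc x0) hD0 e he) as [W [hW [hWx hWc]]].
    exists W. split; auto. split. rewrite hx0e at 1. auto.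
    intros z hz hWz. destruct (hbc z hz) as [hDz hze].
    apply Hd. intros i Hi. apply He; auto. apply hWc; auto. rewrite <- hze. auto.
  - intros x hx. destruct (hbc x hx) as [hD hxe].
    assert (hTx : T x (vsum n (fun i => tscal (g i (bc x i)) (y i)))).
    { rewrite hxe at 1. apply hTg. auto. }
    split; auto. eapply hTY; eauto.
Qed.
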